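(* Consider the oceanic model with threshold $h$ under the Shapley scheme. Let $\Pi$ be a partition of all players into winning pools such that every atomic player $i$ is in a pool whose other members are non-atomic players of total mass $k_i$ with $0<k_i\le h$ and $a_i+k_i\ge h$, and all remaining non-atomic players are in pools containing no atomic player, each of total mass exactly $l$, where $l\ge h$ (there being at least one such pool). Then $\Pi$ is a Nash equilibrium if and only if for all distinct atomic players $i,j$: \[\frac{h-a_i}{k_i^2}=\frac{1}{l},\qquad \frac{k_i+a_i-h}{k_i}\ge\frac{a_i}{l},\qquad \frac{k_i+a_i-h}{k_i}\ge\frac{(h-a_j)^2-(\max(0,h-a_i-a_j))^2+(\max(0,a_i-h+k_j))^2}{2k_j^2}.\]
   Context: Oceanic model: there is a finite set $N_a=\{1,\dots,n\}$ of atomic players, player $i$ having stake $a_i>0$, and a continuum $N_s$ of non-atomic players of total mass $L\ge 0$ (a measurable set of non-atomic players contributes stake equal to its Lebesgue measure). A threshold $h>0$ is fixed and $a_i<h$ for every atomic player. Each player either opens her own pool or joins one; pools partition all players. For a pool $S$ let $m(S)$ be the non-atomic mass in $S$ plus the atomic stakes in $S$; its reward is $\rho(S)=1$ if $m(S)\ge h$ (winning) and $0$ otherwise. A partition $\Pi$ into winning pools is a Nash equilibrium if no atomic player can strictly increase her payment by moving to another pool of $\Pi$ or opening a new pool alone, and no non-atomic player can strictly increase her reward per unit of stake by moving to another pool of $\Pi$ (a non-atomic player is infinitesimal, so her move does not change the per-unit reward of the pool she joins). Shapley scheme (oceanic): in a pool $S$ with non-atomic mass $k>0$ and atomic members with stakes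 $b_1,\dots,b_t$, let $L_1,\dots,L_t$ be i.i.d. uniform on $[0,k]$ and $P(i)=\{j\ne i: L_j<L_i\}$; atomic member $i$ receives $\Pr\big[\sum_{j\in P(i)}b_j+L_i<h\le\sum_{j\in P(i)}b_j+L_i+b_i\big]$, and the remaining reward is shared equally per unit of stake among the non-atomic members. *)

(* Defs.v *)
From HB Require Import structures.
From mathcomp Require Import all_boot all_order all_algebra.
From mathcomp Require Import all_classical all_reals all_analysis.
Set Implicit Arguments. Unset Strict Implicit. Unset Printing Implicit Defensive.
Import Order.TTheory GRing.Theory Num.Theory.
Import numFieldNormedType.Exports.
Local Open Scope classical_set_scope.
Local Open Scope ring_scope.

(* A partition Pi of all players into pools is described by a finite type P of
   pool labels, the pool sigma i of each atomic player i, and the non-atomic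
   mass mu p (Lebesgue measure of the set of non-atomic players) of each pool p. *)

Section Oceanic.
Variable R : realType.
Variable n : nat.
Variables (a : 'I_n -> R) (h : R).

Definition stake (A : {set 'I_n}) : R := \sum_(j in A) a j.

Definition reward (A : {set 'I_n}) (k : R) : R :=
  if h <= k + stake A then 1 else 0.

(* Shapley payment of atomic member i of a pool with atomic members A (i \in A)
   and non-atomic mass k:
     Pr[ sum_{j in P(i)} a_j + L_i < h <= sum_{j in P(i)} a_j + L_i + a_i ],
   L_j i.i.d. uniform on [0,k], P(i) = {j in A, j <> i : L_j < L_i}.
   Written as L_i = k*u with u uniform on [0,1]; conditionally on L_i = k*u,
   the events {L_j < L_i} (j in A\{i}) are independent of probability u, so
   P(i) = S with probability u^|S| (1-u)^(|A\{i}|-|S|). *)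
Definition shapley_pay (A : {set 'I_n}) (k : R) (i : 'I_n) : R :=
  \int[lebesgue_measure]_(u in `[0%R, 1%R])
    (\sum_(S in powerset (A :\ i))
       u ^+ #|S| * (1 - u) ^+ (#|A :\ i| - #|S|)%N *
       (if (stake S + k * u < h) && (h <= stake S + k * u + a i) then 1 else 0)).

Variables (P : finType) (sigma : 'I_n -> P) (mu : P -> R).

Definition members (p : P) : {set 'I_n} := [set i | sigma i == p].

(* (sigma, mu) is a partition of all players (atomic players and a
   continuum of total mass L) into nonempty pools *)
Definition is_partition (L : R) : Prop :=
  (forall p, 0 <= mu p) /\ \sum_(p : P) mu p = L /\
  (forall p, (exists i, sigma i = p) \/ 0 < mu p).

Definition winning (p : P) : Prop := h <= mu p + stake (members p).

Definition cur_pay (i : 'I_n) : R := shapley_pay (members (sigma i)) (mu (sigma i)) i.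

Definition per_unit (p : P) : R :=
  (reward (members p) (mu p) - \sum_(i in members p) shapley_pay (members p) (mu p) i)
  / mu p.

Definition is_NE : Prop :=
  (forall p, winning p) /\
  (forall i : 'I_n,
     (forall q, q != sigma i ->
        shapley_pay (i |: members q) (mu q) i <= cur_pay i) /\
     shapley_pay [set i] 0 i <= cur_pay i) /\
  (* a non-atomic player of pool p (which requires mu p > 0) moving to q *)
  (forall p q, p != q -> 0 < mu p -> per_unit q <= per_unit p).

End Oceanic.

(* Main.v *)
Require Import Defs.
From HB Require Import structures.
From mathcomp Require Import all_boot all_order all_algebra.
From mathcomp Require Import all_classical all_reals all_analysis.
From mathcomp Require Import ring lra.
Import Order.TTheory GRing.Theory Num.Theory.
Import numFieldNormedType.Exports.
Section S.
Local Open Scope classical_set_scope.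
Local Open Scope ring_scope.
Variable R : realType.

Lemma int_cc_lt (al be x y : R) : x < y ->
  \int[lebesgue_measure]_(u in `[x, y]) (al + be * u) =
  al * (y - x) + be * (y ^+ 2 - x ^+ 2) / 2.
Proof.
move=> xy.
pose p : {poly R} := al *: 'X + (be / 2) *: 'X^2.
have hp : p^`() = al%:P + be *: 'X.
  rewrite /p !(derivD, derivZ, derivX, derivXn) /=.
  rewrite alg_polyC expr1 -scalerMnr scalerMnl -mulr_natr divfK // pnatr_eq0.
rewrite /Rintegral (@continuous_FTC2 _ _ (horner p)) //.
- rewrite /= /p !hornerE /=. by field.
- apply: continuous_subspaceT => u; apply: continuousD; first exact: cvg_cst.
  apply: continuousM; [exact: cvg_cst| exact: cvg_id].
- split.
  + move=> u _; exact: derivable_horner.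
  + apply: cvg_at_right_filter; exact: continuous_horner.
  + apply: cvg_at_left_filter; exact: continuous_horner.
- move=> u _; rewrite -derivE hp !hornerE //.
Qed.

Lemma int_cc (al be x y : R) : x <= y ->
  \int[lebesgue_measure]_(u in `[x, y]) (al + be * u) =
  al * (y - x) + be * (y ^+ 2 - x ^+ 2) / 2.
Proof.
rewrite le_eqVlt => /orP[/eqP<-|]; last exact: int_cc_lt.
by rewrite set_itv1 Rintegral_set1 !subrr mulr0 mulr0 mul0r addr0.
Qed.

Lemma lin_cont (al be : R) : continuous (fun u : R => al + be * u).
Proof.
move=> u; apply: continuousD; first exact: cvg_cst.
apply: continuousM; [exact: cvg_cst| exact: cvg_id].
Qed.

Lemma lin_int (al be x y : R) :
  lebesgue_measure.-integrable `[x, y] (EFin \o (fun u : R => al + be * u)).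
Proof.
apply: continuous_compact_integrable; first exact: segment_compact.
apply: continuous_subspaceT => u; exact: lin_cont.
Qed.

Lemma int_co (al be x y : R) : x <= y ->
  \int[lebesgue_measure]_(u in `[x, y[) (al + be * u) =
  al * (y - x) + be * (y ^+ 2 - x ^+ 2) / 2.
Proof.
move=> xy; rewrite Rintegral_itv_bndo_bndc ?int_cc //.
apply: integrableS (lin_int al be x y) => //.
by apply: subset_itvl; rewrite bnd_simp.
Qed.

Definition G (al be t : R) := al * t + be * t ^+ 2 / 2.

Lemma key (al be x y : R) (Q : R -> bool) :
  0 <= x -> x <= y -> y <= 1 ->
  (forall u, 0 <= u -> u < 1 -> Q u = (x <= u) && (u < y)) ->
  (Q 1 -> y = 1) ->
  lebesgue_measure.-integrable `[0, 1]
     (EFin \o (fun u : R => if Q u then al + be * u else 0)) /\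
  \int[lebesgue_measure]_(u in `[0, 1]) (if Q u then al + be * u else 0) =
  G al be y - G al be x.
Proof.
move=> x0 xy y1 HQ HQ1.
pose f := fun u : R => al + be * u.
pose S : set R := if Q 1 then [set` `[x, 1]] else [set` `[x, y[].
have SS : S `<=` `[0, 1].
  rewrite /S; case: (Q 1) => u /=; rewrite !in_itv /= => /andP[h1 h2];
   apply/andP; split; lra.
have HS : {in (`[0, 1]%classic : set R), (fun u => if Q u then al + be * u else 0) =1 f \_ S}.
  move=> u; rewrite in_setE /= in_itv /= => /andP[u0 u1].
  rewrite /patch /S.
  case: (ltrP u 1) => u1'.
    rewrite HQ //; case Q1: (Q 1); rewrite mem_setE in_itv /=; last by case: ifP.
    by rewrite (HQ1 Q1) u1' (ltW u1') !andbT; case: ifP.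
  have -> : u = 1 by apply/eqP; rewrite eq_le u1 u1'.
  case Q1: (Q 1); rewrite mem_setE in_itv /=.
    by rewrite lexx andbT; have -> : x <= 1 by lra.
  have -> : (x <= 1 < y) = false by apply/negbTE; rewrite negb_and -leNgt; apply/orP; right.
  by [].
have mS : measurable S by rewrite /S; case: (Q 1); exact: measurable_itv.
have Hint : lebesgue_measure.-integrable `[0, 1] (EFin \o f \_ S).
  rewrite -restrict_EFin; apply/integrable_restrict => //=.
  rewrite setIidr //; apply: integrableS (lin_int al be 0 1) => //.
split.
  apply: eq_integrable Hint => //; move=> u uin /=; by rewrite HS.
transitivity (\int[lebesgue_measure]_(u in `[0, 1]) (f \_ S) u).
  exact: eq_Rintegral.
rewrite -Rintegral_mkcondr setIidr //.
rewrite /S; case Q1: (Q 1).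
  by rewrite /f int_cc ?(HQ1 Q1) /G; [field|lra].
by rewrite /f int_co /G; [field|lra].
Qed.


Lemma key2 (al be x y : R) (Q : R -> bool) (g : R -> R) :
  0 <= x -> x <= y -> y <= 1 ->
  (forall u, 0 <= u -> u < 1 -> Q u = (x <= u) && (u < y)) ->
  (Q 1 -> y = 1) ->
  (forall u, 0 <= u -> u <= 1 -> g u = if Q u then al + be * u else 0) ->
  lebesgue_measure.-integrable `[0, 1] (EFin \o g) /\
  \int[lebesgue_measure]_(u in `[0, 1]) g u = G al be y - G al be x.
Proof.
move=> x0 xy y1 HQ HQ1 Hg.
have [H1 H2] := @key al be x y Q x0 xy y1 HQ HQ1.
have Hg' : {in (`[0, 1]%classic : set R), (fun u => if Q u then al + be * u else 0) =1 g}.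
  by move=> u; rewrite in_setE /= in_itv /= => /andP[u0 u1]; rewrite Hg.
split.
  apply: eq_integrable H1 => //; move=> u uin /=; by rewrite Hg'.
by rewrite -H2; apply: eq_Rintegral => u uin; rewrite Hg'.
Qed.

Variables (n : nat) (a : 'I_n -> R) (h : R).

Lemma stake0 : stake a finset.set0 = 0.
Proof. by rewrite /stake big_set0. Qed.

Lemma stake1 j : stake a [set j] = a j.
Proof. by rewrite /stake big_set1. Qed.

Lemma pay_single (k : R) i :
  shapley_pay a h [set i] k i =
  \int[lebesgue_measure]_(u in `[0, 1])
     (if (k * u < h) && (h <= k * u + a i) then 1 else 0).
Proof.
rewrite /shapley_pay finset.setDv powerset0; apply: eq_Rintegral => u _.
by rewrite big_set1 cards0 stake0 !expr0 !mul1r add0r.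
Qed.


Lemma V1 k i : 0 < k -> k <= h -> h <= a i + k -> a i < h ->
  shapley_pay a h [set i] k i = (k + a i - h) / k.
Proof.
move=> k0 kh hak aih.
rewrite pay_single.
rewrite (proj2 (@key2 1 0 ((h - a i) / k) 1
  (fun u => (k * u < h) && (h <= k * u + a i))
  (fun u => if (k * u < h) && (h <= k * u + a i) then 1 else 0) _ _ _ _ _ _)).
- rewrite /G; field; lra.
- by apply: divr_ge0; lra.
- by rewrite ler_pdivrMr // mul1r; lra.
- by [].
- move=> u u0 u1; rewrite ler_pdivrMr // u1 andbT.
  have -> : k * u < h by nra.
  by rewrite lerBlDr mulrC.
- by [].
- by move=> u _ _; rewrite mul0r addr0.
Qed.

Lemma V2 l i : h <= l -> 0 < a i -> a i < h -> 0 < h ->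
  shapley_pay a h [set i] l i = a i / l.
Proof.
move=> hl ai0 aih h0.
have l0 : 0 < l by lra.
rewrite pay_single.
rewrite (proj2 (@key2 1 0 ((h - a i) / l) (h / l)
  (fun u => (l * u < h) && (h <= l * u + a i))
  (fun u => if (l * u < h) && (h <= l * u + a i) then 1 else 0) _ _ _ _ _ _)).
- rewrite /G; field; lra.
- by apply: divr_ge0; lra.
- by rewrite ler_pdivrMr // divfK ?gt_eqF //; lra.
- by rewrite ler_pdivrMr // mul1r.
- move=> u u0 u1; rewrite ler_pdivrMr // ltr_pdivlMr // andbC.
  by rewrite lerBlDr [l * u]mulrC.
- by move=> /andP[H _]; exfalso; lra.
- by move=> u _ _; rewrite mul0r addr0.
Qed.

Lemma V3 i : a i < h -> shapley_pay a h [set i] 0 i = 0.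
Proof.
move=> aih.
rewrite pay_single.
rewrite (proj2 (@key2 1 0 0 0
  (fun u => (0 * u < h) && (h <= 0 * u + a i))
  (fun u => if (0 * u < h) && (h <= 0 * u + a i) then 1 else 0) _ _ _ _ _ _)).
- by rewrite subrr.
- by [].
- by [].
- by [].
- move=> u u0 u1; rewrite mul0r add0r (leNgt h) aih andbF.
  by apply/esym/negbTE; rewrite negb_and -!ltNge -leNgt u0 orbT.
- by rewrite mul0r add0r (leNgt h) aih andbF.
- by move=> u _ _; rewrite mul0r addr0.
Qed.


Lemma pay_pair i j k : i != j ->
  shapley_pay a h (i |: [set j]) k i =
  \int[lebesgue_measure]_(u in `[0, 1])
     ((1 - u) * (if (k * u < h) && (h <= k * u + a i) then 1 else 0) +
      u * (if (a j + k * u < h) && (h <= a j + k * u + a i) then 1 else 0)).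
Proof.
move=> ij.
rewrite /shapley_pay setU1K; last by rewrite finset.in_set1.
rewrite powerset1; apply: eq_Rintegral => u _.
rewrite big_setU1; last by rewrite finset.in_set1 eq_sym -cards_eq0 cards1.
rewrite big_set1 cards0 cards1 stake0 stake1 /=.
rewrite (_ : (1 - 0)%N = 1%N) // (_ : (1 - 1)%N = 0%N) //.
by rewrite !expr0 !expr1 !mul1r mulr1 !add0r.
Qed.

Lemma V4 i j k : i != j -> 0 < k -> k <= h -> h <= a j + k ->
  0 < a i -> a i < h -> 0 < a j -> a j < h ->
  shapley_pay a h (i |: [set j]) k i =
  ((h - a j) ^+ 2 - (Num.max 0 (h - a i - a j)) ^+ 2
        + (Num.max 0 (a i - h + k)) ^+ 2) / (2 * k ^+ 2).
Proof.
move=> ij k0 kh hak ai0 aih aj0 ajh.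
rewrite pay_pair //.
pose Q1 := fun u => (k * u < h) && (h <= k * u + a i).
pose Q2 := fun u => (a j + k * u < h) && (h <= a j + k * u + a i).
have [I1 E1] :
   lebesgue_measure.-integrable `[0, 1] (EFin \o (fun u => (1 - u) * (if Q1 u then 1 else 0))) /\
   \int[lebesgue_measure]_(u in `[0, 1]) ((1 - u) * (if Q1 u then 1 else 0)) =
     (Num.max 0 (a i - h + k)) ^+ 2 / (2 * k ^+ 2).
  have Hg : forall u, 0 <= u -> u <= 1 ->
     (1 - u) * (if Q1 u then 1 else 0) = if Q1 u then 1 + (-1) * u else 0.
    by move=> u _ _; case: ifP => _; [rewrite mulr1 mulN1r | rewrite mulr0].
  case: (lerP (h - a i) k) => hk.
    case: (@key2 1 (-1) ((h - a i) / k) 1 Q1 _ _ _ _ _ _ Hg).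
    - by apply: divr_ge0; lra.
    - by rewrite ler_pdivrMr // mul1r.
    - by [].
    - move=> u u0 u1; rewrite /Q1 ler_pdivrMr // u1 andbT.
      have -> : k * u < h by nra.
      by rewrite lerBlDr mulrC.
    - by [].
    move=> I E.
    split => //; rewrite E max_r; last by lra.
    rewrite /G; field; lra.
  case: (@key2 1 (-1) 1 1 Q1 _ _ _ _ _ _ Hg).
  - by [].
  - by [].
  - by [].
  - move=> u u0 u1; rewrite /Q1 (leNgt 1 u) u1 /=.
    have -> : (h <= k * u + a i) = false by apply/negbTE; rewrite -ltNge; nra.
    by rewrite andbF.
  - by [].
  move=> I E.
  split => //; rewrite E max_l; last by lra.
  by rewrite subrr expr0n /= mul0r.
have [I2 E2] :
   lebesgue_measure.-integrable `[0, 1] (EFin \o (fun u => u * (if Q2 u then 1 else 0))) /\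
   \int[lebesgue_measure]_(u in `[0, 1]) (u * (if Q2 u then 1 else 0)) =
     ((h - a j) ^+ 2 - (Num.max 0 (h - a i - a j)) ^+ 2) / (2 * k ^+ 2).
  have Hg : forall u, 0 <= u -> u <= 1 ->
     u * (if Q2 u then 1 else 0) = if Q2 u then 0 + 1 * u else 0.
    by move=> u _ _; case: ifP => _; [rewrite mulr1 mul1r add0r | rewrite mulr0].
  have y0 : 0 <= (h - a j) / k by apply: divr_ge0; lra.
  have y1 : (h - a j) / k <= 1 by rewrite ler_pdivrMr // mul1r; lra.
  have Q21 : Q2 1 -> (h - a j) / k = 1.
    by rewrite /Q2 => /andP[H _]; exfalso; lra.
  case: (lerP 0 (h - a i - a j)) => hij.
    case: (@key2 0 1 ((h - a i - a j) / k) ((h - a j) / k) Q2 _ _ _ _ _ _ Hg).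
    - by apply: divr_ge0; lra.
    - by rewrite ler_pdivrMr // divfK ?gt_eqF //; lra.
    - by [].
    - move=> u u0 u1; rewrite /Q2 ler_pdivrMr // ltr_pdivlMr // andbC.
      by apply/idP/idP => /andP[H1 H2]; apply/andP; split; lra.
    - by [].
    move=> I E.
    split => //; rewrite E.
    rewrite /G; field; lra.
  case: (@key2 0 1 0 ((h - a j) / k) Q2 _ _ _ _ _ _ Hg).
  - by [].
  - by [].
  - by [].
  - move=> u u0 u1; rewrite /Q2 u0 /= ltr_pdivlMr // -ltrBrDl [u * k]mulrC.
    have -> : h <= a j + k * u + a i by nra.
    by rewrite andbT.
  - by [].
  move=> I E.
  split => //; rewrite E.
  rewrite /G; field; lra.
rewrite RintegralD //= E1 E2.
field; lra.
Qed.

End S.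

Local Open Scope ring_scope.

Theorem lemma3p5 (R : realType) (n : nat) (a : 'I_n -> R) (h L : R)
  (P : finType) (sigma : 'I_n -> P) (mu : P -> R) (k : 'I_n -> R) (l : R) :
  0 < h ->
  (forall i, 0 < a i /\ a i < h) ->
  0 <= L ->
  is_partition sigma mu L ->
  (* each atomic player is the only atomic member of her pool, whose
     non-atomic mass is k i *)
  injective sigma ->
  (forall i, mu (sigma i) = k i /\ 0 < k i /\ k i <= h /\ h <= a i + k i) ->
  (* all other pools contain only non-atomic players, of mass exactly l *)
  (forall p, (forall i, sigma i != p) -> mu p = l) ->
  (exists p, forall i, sigma i != p) ->
  h <= l ->
  (is_NE a h sigma mu <->
   (forall i, (h - a i) / (k i ^+ 2) = 1 / l /\
              (k i + a i - h) / k i >= a i / l) /\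
   (forall i j, i != j ->
      (k i + a i - h) / k i >=
      ((h - a j) ^+ 2 - (Num.max 0 (h - a i - a j)) ^+ 2
        + (Num.max 0 (a i - h + k j)) ^+ 2) / (2 * k j ^+ 2))).
Proof.
move=> h0 Ha L0 Hpart inj Hk Hl [p0 Hp0] hl.
have l0 : 0 < l by lra.
have memb i : members sigma (sigma i) = [set i].
  apply/setP => j; rewrite !inE; apply/eqP/eqP => [/inj //|->] //.
have memb0 p : (forall i, sigma i != p) -> members sigma p = finset.set0.
  move=> Hp; apply/setP => j; rewrite !inE; exact/negbTE.
have classify p : (exists i, sigma i = p) \/ (forall i, sigma i != p).
  case: (pselect (exists i, sigma i = p)) => [H|H]; [by left|right].
  by move=> i; apply/eqP => E; apply: H; exists i.
have Vc i : cur_pay a h sigma mu i = (k i + a i - h) / k i.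
  have [E [k0 [kh hak]]] := Hk i.
  by rewrite /cur_pay memb E V1 //; exact: (Ha i).2.
have PU1 i : per_unit a h sigma mu (sigma i) = (h - a i) / k i ^+ 2.
  have [E [k0 [kh hak]]] := Hk i.
  rewrite /per_unit memb /reward stake1 big_set1 E V1 //; last exact: (Ha i).2.
  rewrite ifT; last by rewrite addrC.
  field; lra.
have PU0 p : (forall i, sigma i != p) -> per_unit a h sigma mu p = 1 / l.
  move=> Hp; rewrite /per_unit memb0 // /reward stake0 big_set0 addr0 Hl //.
  by rewrite ifT // subr0.
split.
- move=> [Hwin [Hmove Hpu]]; split.
  + move=> i; have [E [k0 [kh hak]]] := Hk i.
    have ne : p0 != sigma i by rewrite eq_sym; exact: Hp0.
    split.
    * have A := Hpu (sigma i) p0 (Hp0 i) ltac:(by rewrite E).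
      have B := Hpu p0 (sigma i) ne ltac:(by rewrite Hl).
      rewrite PU1 PU0 // in A B; apply/le_anti; rewrite A B //.
    * have := (Hmove i).1 p0 ne.
      rewrite memb0 // finset.setU0 (Hl p0 Hp0) V2 //; first by rewrite Vc.
      - exact: (Ha i).1.
      - exact: (Ha i).2.
  + move=> i j ij.
    have ne : sigma j != sigma i.
      by apply/negP => /eqP Ej; move: ij; rewrite (inj _ _ Ej) eqxx.
    have [E [k0 [kh hak]]] := Hk j.
    have := (Hmove i).1 (sigma j) ne.
    rewrite memb E V4 //; first by rewrite Vc.
    - exact: (Ha i).1.
    - exact: (Ha i).2.
    - exact: (Ha j).1.
    - exact: (Ha j).2.
- move=> [H1 H2]; split; [|split].
  + move=> p; rewrite /winning.
    case: (classify p) => [[i <-]|Hp].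
      have [E [k0 [kh hak]]] := Hk i.
      by rewrite memb stake1 E addrC.
    by rewrite memb0 // stake0 addr0 Hl.
  + move=> i; split.
    * move=> q nq; rewrite Vc.
      case: (classify q) => [[j Ej]|Hq].
        have ij : i != j by apply/negP => /eqP Eij; move: nq; rewrite -Ej Eij eqxx.
        have [E [k0 [kh hak]]] := Hk j.
        rewrite -Ej memb E V4 //; first exact: H2.
        - exact: (Ha i).1.
        - exact: (Ha i).2.
        - exact: (Ha j).1.
        - exact: (Ha j).2.
      rewrite memb0 // finset.setU0 Hl // V2 //; first exact: (H1 i).2.
      - exact: (Ha i).1.
      - exact: (Ha i).2.
    * rewrite V3 ?Vc; last exact: (Ha i).2.
      have [E [k0 [kh hak]]] := Hk i.
      by apply: divr_ge0; lra.
  + have PUall p : per_unit a h sigma mu p = 1 / l.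
      case: (classify p) => [[i <-]|Hp]; last exact: PU0.
      by rewrite PU1; exact: (H1 i).1.
    by move=> p q _ _; rewrite !PUall.
Qed.
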